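(* Let $\mathcal{F}$ be a $T$-equivariant rank 2 $\mu$-stable reflexive sheaf on $\mathbb{P}^3$ with Chern classes $c_1,c_2,c_3$ (as integers) and toric data $\{(u_i,v_i,p_i)\}_{i=1,\dots,4}$. Then: (i) $c_3\equiv c_1c_2\pmod 2$; (ii) if $c_1\in\{-1,0\}$ then $c_2>0$; (iii) if $c_1=-1$ then $0\le c_3\le c_2^2$, and if $c_1=0$ then $0\le c_3\le c_2^2-c_2+2$. If $c_1=-1$, then $c_3=c_2^2$ if and only if one of the following holds: (a) there exist $\{i,j,k,l\}=\{1,2,3,4\}$ with $p_i=p_j$, $p_j,p_k,p_l$ mutually distinct, $v_i\ge1$, $v_j\ge1$, $v_k=1$, and $v_i+v_j=v_l$; (b) there exist $\{i,j,k,l\}=\{1,2,3,4\}$ with $v_i=0$, $p_j,p_k,p_l$ mutually distinct, $v_j=1$, and $v_k=v_l\ge1$. If $c_1=0$, then $c_3=c_2^2-c_2+2$ if and only if one of the following holds: (a) $p_1,p_2,p_3,p_4$ are mutually distinct and $v_1=v_2=v_3=v_4=1$; (b) there exist $\{i,j,k,l\}=\{1,2,3,4\}$ with $p_i=p_j$, $p_j,p_k,p_l$ mutually distinct, $v_i=v_j=1$ and $v_k=v_l=2$; (c) there exist $\{i,j,k,l\}=\{1,2,3,4\}$ with $v_i=0$, $p_j,p_k,p_l$ mutually distinct, and $v_j=v_k=v_l=2$.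
   Context: $T=(\mathbb{C}^* )^3$ is the dense open torus of $\mathbb{P}^3$; $\mathbb{P}^3$ is the toric variety of the fan in $\mathbb{Z}^3$ with rays $\rho_1,\dots,\rho_4$ generated by $n_1=e_1,n_2=e_2,n_3=e_3,n_4=-e_1-e_2-e_3$. By Klyachko's description, a $T$-equivariant rank 2 reflexive sheaf is given by four increasing filtrations $\{V^{\rho_i}(\lambda)\}_{\lambda\in\mathbb{Z}}$ of $\mathbb{C}^2$ (zero for $\lambda\ll0$, all of $\mathbb{C}^2$ for $\lambda\gg0$), the weight-$m$ sections over the chart of the cone spanned by $\rho_a,\rho_b,\rho_c$ being $V^{\rho_a}(\langle m,n_a\rangle)\cap V^{\rho_b}(\langle m,n_b\rangle)\cap V^{\rho_c}(\langle m,n_c\rangle)$; with these conventions a line bundle with jumps at $u_1,\dots,u_4$ has $c_1=-(u_1+\dots+u_4)H$. The toric data are the unique $u_i\in\mathbb{Z}$, $v_i\in\mathbb{Z}_{\ge0}$, $p_i\in\mathbb{P}^1=\mathrm{Gr}(1,\mathbb{C}^2)$ with $V^{\rho_i}(\lambda)=0$ for $\lambda<u_i$, $=p_i$ for $u_i\le\lambda<u_i+v_i$, $=\mathbb{C}^2$ for $\lambda\ge u_i+v_i$ (if $v_i=0$, $p_i$ does not occur). Stability is with respect to $\mathcal{O}(1)$; Chern classes are integers via $H^{2i}(\mathbb{P}^3,\mathbb{Z})=\mathbb{Z}H^i$, $H$ the hyperplane class. ''There exist $\{i,j,k,l\}=\{1,2,3,4\}$'' means for some ordering $i,j,k,l$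 of the four indices. *)

(* Defs.v *)
(* Equivariant rank 2 reflexive sheaves on P^3 are encoded
   by their Klyachko data (four increasing filtrations of C^2). *)
From mathcomp Require Import all_boot all_order all_algebra.
From mathcomp Require Import complex.
From mathcomp Require Import Rstruct.
From Stdlib Require Rdefinitions.
Set Implicit Arguments.
Unset Strict Implicit.
Unset Printing Implicit Defensive.
Import Order.TTheory GRing.Theory Num.Theory.
Local Open Scope ring_scope.

Definition CC : fieldType := (Rdefinitions.R)[i].

Definition sub2 := {vspace 'rV[CC]_2}.

(* Klyachko data of a T-equivariant rank 2 reflexive sheaf on P^3:
   V i lambda = V^{rho_(i+1)}(lambda), i : 'I_4, with
   n_1 = e_1, n_2 = e_2, n_3 = e_3, n_4 = -e_1-e_2-e_3. *)
Definition klyachko := 'I_4 -> int -> sub2.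

Definition is_filtration (V : klyachko) : Prop :=
  forall i : 'I_4,
    (forall a b : int, (a <= b)%R -> (V i a <= V i b)%VS) /\
    (exists a0 : int, forall a, (a <= a0)%R -> V i a = 0%VS) /\
    (exists a1 : int, forall a, (a1 <= a)%R -> V i a = fullv).

Definition toric_data (V : klyachko) (u : 'I_4 -> int) (v : 'I_4 -> nat)
  (p : 'I_4 -> sub2) : Prop :=
  forall i : 'I_4,
    (\dim (p i) = 1)%N /\
    forall l : int,
      V i l = (if (l < u i)%R then 0%VS
               else if (l < u i + (v i)%:Z)%R then p i else fullv).

(* Weight-m part of H^0(P^3, F(t)) : intersection over all four rays; the
   twist by O(t) shifts the filtration of rho_4 (O(t) has jump -t at rho_4). *)
Definition r1 : 'I_4 := @Ordinal 4 0 isT.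
Definition r2 : 'I_4 := @Ordinal 4 1 isT.
Definition r3 : 'I_4 := @Ordinal 4 2 isT.
Definition r4 : 'I_4 := @Ordinal 4 3 isT.

Definition sec_dim (V : klyachko) (t : int) (m1 m2 m3 : int) : nat :=
  \dim (V r1 m1 :&: V r2 m2 :&: V r3 m3 :&: V r4 ((- (m1 + m2 + m3) + t)%R))%VS.

Definition h0box (V : klyachko) (t : int) (N : nat) : nat :=
  (\sum_(a < (N + N).+1) \sum_(b < (N + N).+1) \sum_(c < (N + N).+1)
     sec_dim V t (a%:Z - N%:Z) (b%:Z - N%:Z) (c%:Z - N%:Z))%N.

Definition h0_is (V : klyachko) (t : int) (n : nat) : Prop :=
  exists N0 : nat, forall N : nat, (N0 <= N)%N -> h0box V t N = n.

(* 6 * chi(F(t)) by Riemann-Roch for a rank 2 reflexive sheaf on P^3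
   (Hartshorne, Stable reflexive sheaves, Thm 2.3):
   chi(F) = (c1^3 - 3 c1 c2 + 3 c3)/6 + (c1^2 - 2 c2) + 11 c1/6 + 2,
   applied to F(t): c1(F(t)) = c1 + 2t, c2(F(t)) = c2 + c1 t + t^2,
   c3(F(t)) = c3. *)
Definition rr6 (c1 c2 c3 t : int) : int :=
  let a := c1 + 2 * t in
  let b := c2 + c1 * t + t ^+ 2 in
  a ^+ 3 - 3 * a * b + 3 * c3 + 6 * (a ^+ 2 - 2 * b) + 11 * a + 12.

(* (c1, c2, c3) are the Chern classes of F: the Hilbert polynomial of F
   (h^0(F(t)) = chi(F(t)) for t >> 0) is the Riemann-Roch polynomial. *)
Definition chern (V : klyachko) (c1 c2 c3 : int) : Prop :=
  exists t0 : int, forall t : int, (t0 <= t)%R ->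
    exists n : nat, h0_is V t n /\ 6 * (n%:Z) = rr6 c1 c2 c3 t.

(* mu-stability (w.r.t. O(1)), tested on equivariant saturated rank 1
   subsheaves: for a line L of C^2, the subsheaf has filtrations
   V^{rho_i}(l) :&: L, a line bundle with jumps w_i, so c1 = -(sum w_i);
   stability: mu(sub) = -(sum w_i) < c1(F)/2. *)
Definition mu_stable (V : klyachko) : Prop :=
  forall c1 c2 c3 : int, chern V c1 c2 c3 ->
  forall L : sub2, \dim L = 1%N ->
  forall w : 'I_4 -> int,
    (forall i l, \dim (V i l :&: L)%VS = (w i <= l)%R :> nat) ->
    - 2 * (\sum_(i < 4) w i) < c1.

Definition perm4 (i j k l : 'I_4) : bool := uniq [:: i; j; k; l].

(* Main.v *)
Require Import Defs.
From mathcomp Require Import all_boot all_order all_algebra.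
From mathcomp Require Import complex Rstruct.
From mathcomp Require Import zify ring lra.
Import Order.TTheory GRing.Theory Num.Theory.

Local Open Scope ring_scope.

Lemma core_odd (z1 z2 z3 : int) : 0 <= z1 -> 0 <= z2 -> 0 <= z3 ->
  (1+z2+z3)*(1+z1+z3)*(1+z1+z2) + (z1*z2+z1*z3+z2*z3) <=
   (1 + z1 + z2 + z3 + z1*z2+z1*z3+z2*z3)^+2.
Proof. by move=> *; rewrite expr2; nia. Qed.

Lemma NT3odd (x y z h : int) : 0 <= x -> 0 <= y -> 0 <= z ->
  x + y + z = 2*h+1 -> x <= h -> y <= h -> z <= h ->
  x*y*z <= (x*y+y*z+z*x - h*(h+1))^+2 /\
  (x*y*z = (x*y+y*z+z*x - h*(h+1))^+2 ->
     (x = h /\ y = h) \/ (x = h /\ z = h) \/ (y = h /\ z = h)).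
Proof.
move=> x0 y0 z0 S xh yh zh.
have [z1 [z10 e1]] : exists z1, 0 <= z1 /\ x = h - z1 by exists (h - x); split; lia.
have [z2 [z20 e2]] : exists z2, 0 <= z2 /\ y = h - z2 by exists (h - y); split; lia.
have [z3 [z30 e3]] : exists z3, 0 <= z3 /\ z = h - z3 by exists (h - z); split; lia.
have hE : h = 1 + z1 + z2 + z3 by lia.
subst x y z.
have c2E : (h - z1)*(h - z2)+(h - z2)*(h - z3)+(h - z3)*(h - z1) - h*(h+1) =
   1 + z1 + z2 + z3 + z1*z2+z1*z3+z2*z3 by rewrite hE; ring.
have xyzE : (h - z1)*(h - z2)*(h - z3) = (1+z2+z3)*(1+z1+z3)*(1+z1+z2) by rewrite hE; ring.
rewrite c2E xyzE.
have key := @core_odd z1 z2 z3 z10 z20 z30.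
have q12 : 0 <= z1*z2 by apply: mulr_ge0.
have q13 : 0 <= z1*z3 by apply: mulr_ge0.
have q23 : 0 <= z2*z3 by apply: mulr_ge0.
split; first lra.
move=> eq.
have p12 : z1 * z2 = 0 by lra.
have p13 : z1 * z3 = 0 by lra.
have p23 : z2 * z3 = 0 by lra.
have /orP[/eqP f1|/eqP f2] : (z1 == 0) || (z2 == 0) by rewrite -mulf_eq0 p12.
all: have /orP[/eqP f1'|/eqP f3] : (z1 == 0) || (z3 == 0) by rewrite -mulf_eq0 p13.
all: have /orP[/eqP f2'|/eqP f3'] : (z2 == 0) || (z3 == 0) by rewrite -mulf_eq0 p23.
all: lia.
Qed.

Lemma core_even (z1 z2 z3 : int) : 0 <= z1 -> 0 <= z2 -> 0 <= z3 ->
  (2+z2+z3)*(2+z1+z3)*(2+z1+z2) + 2*(z1+z2+z3) <=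
   (3 + 2*z1 + 2*z2 + 2*z3 + z1*z2+z1*z3+z2*z3)^+2 -
   (3 + 2*z1 + 2*z2 + 2*z3 + z1*z2+z1*z3+z2*z3) + 2.
Proof. by move=> *; rewrite expr2; nia. Qed.

Lemma NT3even (x y z h : int) : 0 <= x -> 0 <= y -> 0 <= z ->
  x + y + z = 2*h -> x <= h - 1 -> y <= h - 1 -> z <= h - 1 ->
  x*y*z <= (x*y+y*z+z*x - h*h)^+2 - (x*y+y*z+z*x - h*h) + 2 /\
  (x*y*z = (x*y+y*z+z*x - h*h)^+2 - (x*y+y*z+z*x - h*h) + 2 ->
     x = 2 /\ y = 2 /\ z = 2).
Proof.
move=> x0 y0 z0 S xh yh zh.
have [z1 [z10 e1]] : exists z1, 0 <= z1 /\ x = h - 1 - z1 by exists (h - 1 - x); split; lia.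
have [z2 [z20 e2]] : exists z2, 0 <= z2 /\ y = h - 1 - z2 by exists (h - 1 - y); split; lia.
have [z3 [z30 e3]] : exists z3, 0 <= z3 /\ z = h - 1 - z3 by exists (h - 1 - z); split; lia.
have hE : h = 3 + z1 + z2 + z3 by lia.
subst x y z.
have c2E : (h - 1 - z1)*(h - 1 - z2)+(h - 1 - z2)*(h - 1 - z3)+(h - 1 - z3)*(h - 1 - z1) - h*h =
   3 + 2*z1 + 2*z2 + 2*z3 + z1*z2+z1*z3+z2*z3 by rewrite hE; ring.
have xyzE : (h - 1 - z1)*(h - 1 - z2)*(h - 1 - z3) = (2+z2+z3)*(2+z1+z3)*(2+z1+z2)
  by rewrite hE; ring.
rewrite c2E xyzE.
have key := @core_even z1 z2 z3 z10 z20 z30.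
split; first lra.
move=> eq.
have : z1 + z2 + z3 <= 0 by lra.
move=> ?; lia.
Qed.

Definition e2_4 (a b c d : int) := a*b+a*c+a*d+b*c+b*d+c*d.
Definition e3_4 (a b c d : int) := a*b*c+a*b*d+a*c*d+b*c*d.

Lemma merge_odd (a b c d h : int) :
  0 <= d -> d <= c -> c <= b -> b <= a -> 1 <= d -> a + b + c + d = 2*h+1 -> a <= h ->
  2*(e2_4 a b c d - h*(h+1)) - c*d - a - b > 0.
Proof. rewrite /e2_4 => *; nia. Qed.

Lemma merge_even (a b c d h : int) :
  0 <= d -> d <= c -> c <= b -> b <= a -> 1 <= d -> a + b + c + d = 2*h -> a <= h - 1 ->
  c + d + 2 <= a + b ->
  2*(e2_4 a b c d - h*h) - c*d - 1 - a - b > 0.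
Proof. rewrite /e2_4 => *; nia. Qed.

Lemma c2pos_odd (a b c d h : int) :
  0 <= d -> d <= c -> c <= b -> b <= a -> a + b + c + d = 2*h+1 -> a <= h ->
  0 < e2_4 a b c d - h*(h+1).
Proof. rewrite /e2_4 => *; nia. Qed.

Lemma c2pos_even (a b c d h : int) :
  0 <= d -> d <= c -> c <= b -> b <= a -> a + b + c + d = 2*h -> a <= h - 1 ->
  0 < e2_4 a b c d - h*h.
Proof. rewrite /e2_4 => *; nia. Qed.

Lemma NTodd (a b c d h : int) :
  0 <= d -> d <= c -> c <= b -> b <= a -> a + b + c + d = 2*h+1 -> a <= h ->
  let c2 := e2_4 a b c d - h*(h+1) in
  [/\ 0 < c2, e3_4 a b c d <= c2^+2 &
      (e3_4 a b c d = c2^+2 -> [/\ d = 0, c = 1, a = h & b = h])].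
Proof.
move=> d0 dc cb ba S ah c2.
have c2p : 0 < c2 by apply: c2pos_odd.
have [d00|d1] : d = 0 \/ 1 <= d by lia.
  subst d.
  have [] := @NT3odd a b c h; try lia.
  have -> : e3_4 a b c 0 = a*b*c by rewrite /e3_4; ring.
  have -> : a*b+b*c+c*a - h*(h+1) = c2 by rewrite /c2 /e2_4; ring.
  move=> H1 H2; split => // /H2 [[? ?]|[[? ?]|[? ?]]]; split; lia.
have [] := @NT3odd a b (c+d) h; try lia.
have m := @merge_odd a b c d h d0 dc cb ba d1 S ah.
have cd0 : 0 < c * d by apply: mulr_gt0; lia.
have E1 : a*b*(c+d) = e3_4 a b c d - c*d*(a+b) by rewrite /e3_4; ring.
have E2 : a*b+b*(c+d)+(c+d)*a - h*(h+1) = c2 - c*d by rewrite /c2 /e2_4; ring.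
rewrite E1 E2 => H1 _.
have key : c2^+2 - e3_4 a b c d = ((c2 - c*d)^+2 - (e3_4 a b c d - c*d*(a+b))) +
   c*d*(2*c2 - c*d - a - b) by ring.
have pos : 0 < c*d*(2*c2 - c*d - a - b) by apply: mulr_gt0.
have lt : e3_4 a b c d < c2^+2 by lra.
split => //; first lra.
by move=> eq; move: lt; rewrite eq ltxx.
Qed.

Lemma NTeven (a b c d h : int) :
  0 <= d -> d <= c -> c <= b -> b <= a -> a + b + c + d = 2*h -> a <= h - 1 ->
  let c2 := e2_4 a b c d - h*h in
  [/\ 0 < c2, e3_4 a b c d <= c2^+2 - c2 + 2 &
      (e3_4 a b c d = c2^+2 - c2 + 2 ->
        (a = 1 /\ b = 1 /\ c = 1 /\ d = 1) \/ (a = 2 /\ b = 2 /\ c = 2 /\ d = 0))].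
Proof.
move=> d0 dc cb ba S ah c2.
have c2p : 0 < c2 by apply: c2pos_even.
have [d00|d1] : d = 0 \/ 1 <= d by lia.
  subst d.
  have [] := @NT3even a b c h; try lia.
  have -> : e3_4 a b c 0 = a*b*c by rewrite /e3_4; ring.
  have -> : a*b+b*c+c*a - h*h = c2 by rewrite /c2 /e2_4; ring.
  move=> H1 H2; split => // /H2; lia.
have [lt2|ge2] : c + d + 2 <= a + b \/ a + b < c + d + 2 by lia.
  have [] := @NT3even a b (c+d) h; try lia.
  have m := @merge_even a b c d h d0 dc cb ba d1 S ah lt2.
  have cd0 : 0 < c * d by apply: mulr_gt0; lia.
  have E1 : a*b*(c+d) = e3_4 a b c d - c*d*(a+b) by rewrite /e3_4; ring.
  have E2 : a*b+b*(c+d)+(c+d)*a - h*h = c2 - c*d by rewrite /c2 /e2_4; ring.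
  rewrite E1 E2 => H1 _.
  have key : (c2^+2 - c2 + 2) - e3_4 a b c d =
     ((c2 - c*d)^+2 - (c2 - c*d) + 2 - (e3_4 a b c d - c*d*(a+b))) +
     c*d*(2*c2 - c*d - 1 - a - b) by ring.
  have pos : 0 < c*d*(2*c2 - c*d - 1 - a - b) by apply: mulr_gt0.
  have lt : e3_4 a b c d < c2^+2 - c2 + 2 by lra.
  split => //; first lra.
  by move=> eq; move: lt; rewrite eq ltxx.
have [ea [eb ec]] : a = d /\ b = d /\ c = d by lia.
subst a b c.
have hE : h = 2 * d by lia.
have c2E : c2 = 2 * d * d by rewrite /c2 /e2_4 hE; ring.
have e3E : e3_4 d d d d = 4 * d * d * d by rewrite /e3_4; ring.
rewrite e3E c2E.
have key : (2*d*d)^+2 - 2*d*d + 2 - 4*d*d*d = 2*(d-1)*(2*d*d*d - d - 1) by ring.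
have p1 : 0 <= 2*(d-1)*(2*d*d*d - d - 1) by apply: mulr_ge0; [lia | nia].
split; [nia | lra | ].
move=> eq.
have : 2*(d-1)*(2*d*d*d - d - 1) == 0 by apply/eqP; lra.
rewrite !mulf_eq0 => /orP[/orP[|]|] /eqP ?; first by lia.
  left; lia.
have : d = 1 by nia.
lia.
Qed.

Local Close Scope ring_scope.

Lemma sum_trunc (G : nat -> nat) (X n : nat) : X < n ->
  (forall k, X < k -> G k = 0) ->
  \sum_(k < n) G k = \sum_(k < X.+1) G k.
Proof.
move=> Xn G0; rewrite (big_ord_widen n G Xn) [in RHS]big_mkcond /=.
apply: eq_bigr => i _; case: ifP => // /negbT; rewrite -leqNgt => h.
by rewrite G0.
Qed.

Lemma sum_lin (m : nat) : 2 * \sum_(k < m) (m - k) = m * m.+1.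
Proof.
elim: m => [|m IH]; first by rewrite big_ord0.
rewrite big_ord_recl /= mulnDr.
have -> : \sum_(i < m) (m.+1 - bump 0 i) = \sum_(i < m) (m - i).
  by apply: eq_bigr => i _; rewrite /bump /= add1n subSS.
rewrite IH subn0; lia.
Qed.

Lemma sum_quad (M : nat) :
  3 * \sum_(k < M.+1) ((M - k).+1 * (M - k).+2) = M.+1 * M.+2 * M.+3.
Proof.
elim: M => [|M IH]; first by rewrite big_ord_recl big_ord0.
rewrite big_ord_recl /= subn0 mulnDr.
have -> : \sum_(i < M.+1) ((M.+1 - bump 0 i).+1 * (M.+1 - bump 0 i).+2) =
          \sum_(i < M.+1) ((M - i).+1 * (M - i).+2).
  by apply: eq_bigr => i _; rewrite /bump /= add1n subSS.
rewrite IH; lia.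
Qed.

Lemma sum_ind1 (n X : nat) : X < n -> \sum_(k < n) (k <= X : nat) = X.+1.
Proof.
move=> Xn; rewrite (@sum_trunc (fun k => (k <= X : nat)) X n Xn); last by move=> k; rewrite ltnNge => /negbTE ->.
rewrite (eq_bigr (fun _ => 1)); last by move=> i _; rewrite -ltnS ltn_ord.
by rewrite sum1_card card_ord.
Qed.

Lemma sum_ind2 (n X : nat) : X < n ->
  2 * \sum_(k2 < n) \sum_(k3 < n) (k2 + k3 <= X : nat) = X.+1 * X.+2.
Proof.
move=> Xn.
rewrite (eq_bigr (fun k2 : 'I_n => X.+1 - k2)); last first.
  move=> k2 _.
  case: (leqP k2 X) => h.
    rewrite (eq_bigr (fun k3 : 'I_n => (k3 <= X - k2 : nat))); last first.
      by move=> k3 _; congr nat_of_bool; rewrite leq_subRL // addnC.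
    rewrite sum_ind1; last by lia.
    lia.
  rewrite big1; last by move=> k3 _; have -> : (k2 + k3 <= X) = false by lia.
  lia.
rewrite (@sum_trunc (fun k => X.+1 - k) X n Xn); last by move=> k; lia.
by rewrite sum_lin.
Qed.

Lemma sum_ind3 (M : nat) :
  6 * \sum_(k1 < M.+1) \sum_(k2 < M.+1) \sum_(k3 < M.+1) (k1 + k2 + k3 <= M : nat)
  = M.+1 * M.+2 * M.+3.
Proof.
rewrite -sum_quad.
have -> : 6 = 3 * 2 by [].
rewrite -mulnA big_distrr /=; congr (3 * _).
apply: eq_bigr => k1 _.
have k1M : k1 <= M by rewrite -ltnS.
rewrite -(@sum_ind2 M.+1 (M - k1)); last lia.
congr (2 * _); apply: eq_bigr => k2 _; apply: eq_bigr => k3 _.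
by congr nat_of_bool; lia.
Qed.

Lemma shift (F : int -> nat) (N K : nat) (al : int) :
  (- (N%:Z) <= al)%R -> (al + K%:Z <= N%:Z)%R ->
  (forall m : int, ((m < al)%R || (al + K%:Z < m)%R) -> F m = 0) ->
  \sum_(a < (N + N).+1) F (a%:Z - N%:Z)%R = \sum_(k < K.+1) F (al + k%:Z)%R.
Proof.
move=> h1 h2 F0.
pose j0 := absz (al + N%:Z)%R.
have j0E : (j0%:Z = al + N%:Z)%R by rewrite /j0 abszE ger0_norm //; lia.
rewrite -(big_mkord xpredT (fun a : nat => F (a%:Z - N%:Z)%R)).
rewrite (@big_cat_nat _ _ _ j0) /=; [|lia|lia].
rewrite (@big_cat_nat _ _ _ (j0 + K.+1) j0) /=; [|lia|lia].
rewrite big1_seq; last first.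
  move=> i /andP[_]; rewrite mem_index_iota => /andP[_ hi].
  by apply: F0; apply/orP; left; lia.
rewrite [X in (_ + (_ + X))%N]big1_seq; last first.
  move=> i /andP[_]; rewrite mem_index_iota => /andP[hi _].
  by apply: F0; apply/orP; right; lia.
rewrite add0n addn0.
rewrite -{1}(add0n j0) big_addn addKn big_mkord.
apply: eq_bigr => k _; congr F; lia.
Qed.

Definition cond3 (al1 al2 al3 be m1 m2 m3 : int) : bool :=
  [&& (al1 <= m1)%R, (al2 <= m2)%R, (al3 <= m3)%R & (m1 + m2 + m3 <= be)%R].

Lemma box_count (N M : nat) (al1 al2 al3 be : int) :
  (M%:Z = be - al1 - al2 - al3)%R ->
  (- (N%:Z) <= al1)%R -> (al1 + M%:Z <= N%:Z)%R ->
  (- (N%:Z) <= al2)%R -> (al2 + M%:Z <= N%:Z)%R ->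
  (- (N%:Z) <= al3)%R -> (al3 + M%:Z <= N%:Z)%R ->
  \sum_(a < (N + N).+1) \sum_(b < (N + N).+1) \sum_(c < (N + N).+1)
     cond3 al1 al2 al3 be (a%:Z - N%:Z) (b%:Z - N%:Z) (c%:Z - N%:Z)
  = \sum_(k1 < M.+1) \sum_(k2 < M.+1) \sum_(k3 < M.+1) (k1 + k2 + k3 <= M : nat).
Proof.
move=> ME h1 h1' h2 h2' h3 h3'.
rewrite (@shift (fun m1 => \sum_(b < (N + N).+1) \sum_(c < (N + N).+1)
     cond3 al1 al2 al3 be m1 (b%:Z - N%:Z) (c%:Z - N%:Z)) N M al1) //; last first.
  move=> m /orP H; rewrite big1 // => b _; rewrite big1 // => c _.
  apply/eqP; rewrite eqb0; apply/negP; rewrite /cond3 => /and4P[H1 H2 H3 H4].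
  case: H; lia.
apply: eq_bigr => k1 _.
rewrite (@shift (fun m2 => \sum_(c < (N + N).+1)
     cond3 al1 al2 al3 be (al1 + k1%:Z) m2 (c%:Z - N%:Z)) N M al2) //; last first.
  move=> m /orP H; rewrite big1 // => c _.
  apply/eqP; rewrite eqb0; apply/negP; rewrite /cond3 => /and4P[H1 H2 H3 H4].
  have := ltn_ord k1; case: H; lia.
apply: eq_bigr => k2 _.
rewrite (@shift (fun m3 => 
     (cond3 al1 al2 al3 be (al1 + k1%:Z) (al2 + k2%:Z) m3 : nat)) N M al3) //; last first.
  move=> m /orP H.
  apply/eqP; rewrite eqb0; apply/negP; rewrite /cond3 => /and4P[H1 H2 H3 H4].
  have := ltn_ord k1; have := ltn_ord k2; case: H; lia.
apply: eq_bigr => k3 _.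
congr nat_of_bool; rewrite /cond3.
apply/and4P/idP.
  case=> H1 H2 H3 H4; lia.
move=> H; split; lia.
Qed.

Definition cnt (M : nat) : nat :=
  \sum_(k1 < M.+1) \sum_(k2 < M.+1) \sum_(k3 < M.+1) (k1 + k2 + k3 <= M : nat).

Lemma dim_full2 : \dim (fullv : sub2) = 2.
Proof. by rewrite dimvf dim_matrix. Qed.

Lemma line_cap (P Q : sub2) : \dim P = 1 -> \dim Q = 1 ->
  \dim (P :&: Q)%VS = (P == Q).
Proof.
move=> hP hQ; case: eqP => [->|ne]; first by rewrite capvv hQ.
have le : \dim (P :&: Q)%VS <= \dim P := dimvS (capvSl P Q).
rewrite hP in le.
case: (ltnP (\dim (P :&: Q)%VS) 1) => [|ge]; first by case: (\dim _).
exfalso; apply: ne.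
have e1 : (P :&: Q)%VS == P by rewrite eqEdim capvSl hP.
have e2 : (P :&: Q)%VS == Q by rewrite eqEdim capvSr hQ.
by rewrite -(eqP e1) (eqP e2).
Qed.

Definition cap4 (A : 'I_4 -> sub2) : sub2 := (A r1 :&: A r2 :&: A r3 :&: A r4)%VS.

Lemma cap4_le (A : 'I_4 -> sub2) i : (cap4 A <= A i)%VS.
Proof.
rewrite /cap4; case: i => [[|[|[|[|//]]]] Hi].
- have -> : Ordinal Hi = r1 by apply: val_inj.
  by do 3 apply: subv_trans (capvSl _ _) _.
- have -> : Ordinal Hi = r2 by apply: val_inj.
  by do 2 apply: subv_trans (capvSl _ _) _; apply: capvSr.
- have -> : Ordinal Hi = r3 by apply: val_inj.
  by apply: subv_trans (capvSl _ _) _; apply: capvSr.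
- have -> : Ordinal Hi = r4 by apply: val_inj.
  by apply: capvSr.
Qed.

Lemma cap4_ge (A : 'I_4 -> sub2) (W : sub2) : (forall i, (W <= A i)%VS) -> (W <= cap4 A)%VS.
Proof. by move=> H; rewrite /cap4 !subv_cap !H. Qed.

Definition rep (p : 'I_4 -> sub2) (i : 'I_4) : bool :=
  [forall j : 'I_4, (j < i)%N ==> (p j != p i)].

Lemma rep_unique (p : 'I_4 -> sub2) (s : 'I_4) :
  \sum_(i < 4) (rep p i && (p i == p s) : nat) = 1.
Proof.
case: (@arg_minnP _ s (fun i => p i == p s) (fun i : 'I_4 => (i : nat))) => //.
move=> i0 /eqP Pi0 min0.
rewrite (eq_bigr (fun i => if i == i0 then 1 else 0)); last first.
  move=> i _; case: (boolP (i == i0)) => [/eqP ->|ne].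
    rewrite Pi0 !eqxx andbT; suff -> : rep p i0 by [].
    apply/forallP => j; apply/implyP => ji0.
    apply/negP => /eqP e; have := min0 j; rewrite e Pi0 eqxx => /(_ isT); lia.
  case: (boolP (p i == p s)) => [/eqP e|]; last by rewrite andbF.
  rewrite andbT /rep; case: (boolP [forall _, _]) => // /forallP H.
  exfalso; have := min0 i; rewrite e eqxx => /(_ isT) le.
  have lt : (i0 < i)%N by rewrite ltn_neqAle le andbT; apply: contra ne => /eqP h; apply/eqP/val_inj.
  by move: (H i0); rewrite lt /= Pi0 e eqxx.
by rewrite -big_mkcond big_pred1_eq.
Qed.

Definition Aof (u : 'I_4 -> int) (v : 'I_4 -> nat) (p : 'I_4 -> sub2)
  (l : 'I_4 -> int) (i : 'I_4) : sub2 :=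
  if (l i < u i)%R then 0%VS else if (l i < u i + (v i)%:Z)%R then p i else fullv.
Definition Iv (u : 'I_4 -> int) (v : 'I_4 -> nat) (l : 'I_4 -> int) : bool :=
  [forall i, (u i + (v i)%:Z <= l i)%R].
Definition Ith (u : 'I_4 -> int) (v : 'I_4 -> nat) (p : 'I_4 -> sub2) (s : 'I_4)
  (l : 'I_4 -> int) : bool :=
  [forall j, (u j + ((p j != p s) * v j)%:Z <= l j)%R].
Definition Rsum (p : 'I_4 -> sub2) : nat := \sum_(i < 4) rep p i.

Lemma pointwise u v p (hp : forall i, \dim (p i) = 1) l :
  \dim (cap4 (Aof u v p l)) + Rsum p * Iv u v l =
  2 * Iv u v l + \sum_(i < 4) rep p i * Ith u v p i l.
Proof.
case: (boolP [exists i, (l i < u i)%R]) => [/existsP[i li]|].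
  have -> : Iv u v l = false.
    by apply/negP => /forallP /(_ i); lia.
  rewrite big1; last first.
    move=> j _; suff -> : Ith u v p j l = false by rewrite muln0.
    by apply/negP => /forallP /(_ i); lia.
  have : \dim (cap4 (Aof u v p l)) <= \dim (Aof u v p l i) by apply: dimvS; apply: cap4_le.
  by rewrite /Aof li dimv0 leqn0 => /eqP ->; rewrite /= muln0.
rewrite negb_exists => /forallP N.
have AE : forall i, Aof u v p l i = if (l i < u i + (v i)%:Z)%R then p i else fullv.
  by move=> i; rewrite /Aof; move: (N i); case: ifP.
case: (boolP [exists i, (l i < u i + (v i)%:Z)%R]) => [/existsP[s ss]|]; last first.
  rewrite negb_exists => /forallP E.
  have -> : Iv u v l = true by apply/forallP => i; move: (E i); lia.
  have -> : cap4 (Aof u v p l) = fullv.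
    apply/eqP; rewrite eqEdim subvf /=; apply: dimvS.
    by apply: cap4_ge => i; rewrite AE; move: (E i); case: ifP => //; lia.
  rewrite dim_full2 (eq_bigr (fun i => (rep p i : nat))); last first.
    move=> i _; suff -> : Ith u v p i l = true by rewrite muln1.
    apply/forallP => j; move: (E j) (N j); case: (p j != p i); lia.
  by rewrite /Rsum muln1 addnC.
have -> : Iv u v l = false by apply/negP => /forallP /(_ s); lia.
rewrite muln0 addn0 muln0 add0n.
set C := [forall j, (l j < u j + (v j)%:Z)%R ==> (p j == p s)].
have IthE : forall i, Ith u v p i l = (p i == p s) && C.
  move=> i; apply/idP/idP.
    move/forallP => H; have Hs := H s.
    have eis : p s == p i.
      by apply/negPn/negP => ne; move: Hs; rewrite ne mul1n; lia.
    rewrite eq_sym eis /=; apply/forallP => j; apply/implyP => lj.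
    rewrite (eqP eis); apply/negPn/negP => ne; move: (H j); rewrite ne mul1n; lia.
  case/andP => /eqP ei /forallP H; apply/forallP => j.
  move: (H j) (N j); rewrite ei; case: (boolP (p j == p s)) => [_|_]; rewrite /= ?mul0n ?mul1n.
    lia.
  rewrite implybF; lia.
rewrite (eq_bigr (fun i => C * (rep p i && (p i == p s)))); last first.
  by move=> i _; rewrite IthE; case: (rep p i); case: (p i == p s); case: (C).
rewrite -big_distrr /= rep_unique muln1.
case: (boolP C) => HC.
  have Xs : (cap4 (Aof u v p l) <= p s)%VS by rewrite (subv_trans (cap4_le _ s)) // AE ss.
  have sX : (p s <= cap4 (Aof u v p l))%VS.
    apply: cap4_ge => i; rewrite AE; case: ifP => [li|_]; last by rewrite subvf.
    by move/forallP: HC => /(_ i); rewrite li /= => /eqP ->.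
  have := dimvS Xs; have := dimvS sX; rewrite hp /=; lia.
move: HC; rewrite negb_forall => /existsP[j]; rewrite negb_imply => /andP[lj ne].
have : \dim (cap4 (Aof u v p l)) <= \dim (p j :&: p s)%VS.
  apply: dimvS; rewrite subv_cap.
  by rewrite (subv_trans (cap4_le _ j)) ?(subv_trans (cap4_le _ s)) // !AE ?ss ?lj.
by rewrite line_cap // (negbTE ne) leqn0 => /eqP ->.
Qed.

Lemma ord4_cases (i : 'I_4) : [\/ i = r1, i = r2, i = r3 | i = r4].
Proof.
case: i => [[|[|[|[|//]]]] Hi].
- by constructor 1; apply: val_inj.
- by constructor 2; apply: val_inj.
- by constructor 3; apply: val_inj.
- by constructor 4; apply: val_inj.
Qed.

Lemma forall4 (P : 'I_4 -> bool) : [forall i, P i] = [&& P r1, P r2, P r3 & P r4].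
Proof.
apply/forallP/and4P => [H|[H1 H2 H3 H4] i]; first by split; apply: H.
by case: (ord4_cases i) => ->.
Qed.

Lemma sum4 (F : 'I_4 -> nat) : \sum_(i < 4) F i = F r1 + F r2 + F r3 + F r4.
Proof.
rewrite !big_ord_recr big_ord0 /= add0n.
have e1 : F (widen_ord (leqnSn 3) (widen_ord (leqnSn 2) (widen_ord (leqnSn 1) ord_max))) = F r1
  by congr F; apply: val_inj.
have e2 : F (widen_ord (leqnSn 3) (widen_ord (leqnSn 2) ord_max)) = F r2 by congr F; apply: val_inj.
have e3 : F (widen_ord (leqnSn 3) ord_max) = F r3 by congr F; apply: val_inj.
have e4 : F ord_max = F r4 by congr F; apply: val_inj.
by rewrite e1 e2 e3 e4.
Qed.

Lemma sum4z (F : 'I_4 -> int) : (\sum_(i < 4) F i = F r1 + F r2 + F r3 + F r4)%R.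
Proof.
rewrite !big_ord_recr big_ord0 /= add0r.
have e1 : F (widen_ord (leqnSn 3) (widen_ord (leqnSn 2) (widen_ord (leqnSn 1) ord_max))) = F r1
  by congr F; apply: val_inj.
have e2 : F (widen_ord (leqnSn 3) (widen_ord (leqnSn 2) ord_max)) = F r2 by congr F; apply: val_inj.
have e3 : F (widen_ord (leqnSn 3) ord_max) = F r3 by congr F; apply: val_inj.
have e4 : F ord_max = F r4 by congr F; apply: val_inj.
by rewrite e1 e2 e3 e4.
Qed.

Definition lfun (m1 m2 m3 t : int) : 'I_4 -> int := fun i =>
  match nat_of_ord i with 0 => m1 | 1 => m2 | 2 => m3 | _ => (- (m1 + m2 + m3) + t)%R end.

Lemma sec_dim_E V u v p t m1 m2 m3 : toric_data V u v p ->
  sec_dim V t m1 m2 m3 = \dim (cap4 (Aof u v p (lfun m1 m2 m3 t))).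
Proof.
move=> hT; rewrite /sec_dim /cap4 /Aof /lfun /=.
by rewrite !(fun i => (hT i).2).
Qed.

Definition ThG (u : 'I_4 -> int) (th : 'I_4 -> nat) (l : 'I_4 -> int) : bool :=
  [forall j, (u j + (th j)%:Z <= l j)%R].

Definition Box (f : int -> int -> int -> nat) (N : nat) : nat :=
  \sum_(a < (N + N).+1) \sum_(b < (N + N).+1) \sum_(c < (N + N).+1)
     f (a%:Z - N%:Z)%R (b%:Z - N%:Z)%R (c%:Z - N%:Z)%R.

Definition Bnd (u : 'I_4 -> int) (t : int) : nat :=
  `|t|%N + `|u r1|%N + `|u r2|%N + `|u r3|%N + `|u r4|%N.

Lemma box_ThG u th t N (M : nat) :
  (M%:Z = t - (u r1 + u r2 + u r3 + u r4) - (th r1 + th r2 + th r3 + th r4)%:Z)%R ->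
  Bnd u t <= N ->
  Box (fun m1 m2 m3 => ThG u th (lfun m1 m2 m3 t)) N = cnt M.
Proof.
move=> ME BN.
have key : forall m1 m2 m3, ThG u th (lfun m1 m2 m3 t) =
   cond3 (u r1 + (th r1)%:Z) (u r2 + (th r2)%:Z) (u r3 + (th r3)%:Z)
         (t - u r4 - (th r4)%:Z) m1 m2 m3.
  move=> m1 m2 m3; rewrite /ThG forall4 /cond3 /lfun /=.
  apply/and4P/and4P; case=> H1 H2 H3 H4; split; lia.
rewrite /Box (eq_bigr (fun a : 'I_(N+N).+1 => \sum_(b < (N + N).+1) \sum_(c < (N + N).+1)
  (cond3 (u r1 + (th r1)%:Z) (u r2 + (th r2)%:Z) (u r3 + (th r3)%:Z)
         (t - u r4 - (th r4)%:Z) (a%:Z - N%:Z) (b%:Z - N%:Z) (c%:Z - N%:Z) : nat))); last first.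
  by move=> a _; apply: eq_bigr => b _; apply: eq_bigr => c _; rewrite key.
move: BN; rewrite /Bnd => BN.
rewrite (@box_count N M); rewrite /cnt //; lia.
Qed.

Lemma Box_ext f g N : (forall m1 m2 m3, f m1 m2 m3 = g m1 m2 m3) -> Box f N = Box g N.
Proof. by move=> H; rewrite /Box; do 3 (apply: eq_bigr => ? _); apply: H. Qed.

Lemma BoxD f g N : Box (fun m1 m2 m3 => f m1 m2 m3 + g m1 m2 m3) N = Box f N + Box g N.
Proof.
rewrite /Box -big_split; apply: eq_bigr => a _; rewrite -big_split; apply: eq_bigr => b _.
by rewrite -big_split.
Qed.

Lemma BoxM c f N : Box (fun m1 m2 m3 => c * f m1 m2 m3) N = c * Box f N.
Proof.
rewrite /Box big_distrr; apply: eq_bigr => a _; rewrite big_distrr; apply: eq_bigr => b _.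
by rewrite big_distrr.
Qed.

Lemma BoxS (F : 'I_4 -> int -> int -> int -> nat) N :
  Box (fun m1 m2 m3 => \sum_(i < 4) F i m1 m2 m3) N = \sum_(i < 4) Box (F i) N.
Proof.
rewrite /Box [RHS]exchange_big; apply: eq_bigr => a _; rewrite [RHS]exchange_big; apply: eq_bigr => b _.
by rewrite [RHS]exchange_big.
Qed.

Definition Wc (p : 'I_4 -> sub2) (v : 'I_4 -> nat) (i : 'I_4) : nat :=
  \sum_(j < 4) (p j == p i) * v j.
Definition Vs (v : 'I_4 -> nat) : nat := \sum_(j < 4) v j.
Definition Us (u : 'I_4 -> int) : int := (u r1 + u r2 + u r3 + u r4)%R.

Lemma Wc_compl p v i : \sum_(j < 4) (p j != p i) * v j + Wc p v i = Vs v.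
Proof.
rewrite /Wc /Vs -big_split; apply: eq_bigr => j _.
by case: (p j == p i); rewrite /= ?mul0n ?mul1n ?addn0.
Qed.

Lemma h0_formula V u v p t N : toric_data V u v p ->
  (0 <= t - Us u - (Vs v)%:Z)%R -> Bnd u t <= N ->
  h0box V t N + Rsum p * cnt (absz (t - Us u - (Vs v)%:Z)%R) =
  2 * cnt (absz (t - Us u - (Vs v)%:Z)%R) +
  \sum_(i < 4) rep p i * cnt ((absz (t - Us u - (Vs v)%:Z)%R) + Wc p v i).
Proof.
move=> hT s0 BN.
have hp : forall i, \dim (p i) = 1 by move=> i; case: (hT i).
pose dimf := fun m1 m2 m3 => \dim (cap4 (Aof u v p (lfun m1 m2 m3 t))).
have -> : h0box V t N = Box dimf N.
  rewrite /h0box /Box; do 3 (apply: eq_bigr => ? _); exact: sec_dim_E.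
pose Ivf := fun m1 m2 m3 => (Iv u v (lfun m1 m2 m3 t) : nat).
pose Ithf := fun i m1 m2 m3 => (ThG u (fun j => (p j != p i) * v j) (lfun m1 m2 m3 t) : nat).
have E : Box dimf N + Rsum p * Box Ivf N =
         2 * Box Ivf N + \sum_(i < 4) rep p i * Box (Ithf i) N.
  pose g1 := fun m1 m2 m3 => Rsum p * Ivf m1 m2 m3.
  pose g2 := fun m1 m2 m3 => 2 * Ivf m1 m2 m3.
  pose g3 := fun i m1 m2 m3 => rep p i * Ithf i m1 m2 m3.
  pose g4 := fun m1 m2 m3 => \sum_(i < 4) g3 i m1 m2 m3.
  have -> : Rsum p * Box Ivf N = Box g1 N by rewrite /g1 BoxM.
  have -> : 2 * Box Ivf N = Box g2 N by rewrite /g2 BoxM.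
  have -> : \sum_(i < 4) rep p i * Box (Ithf i) N = Box g4 N.
    by rewrite /g4 BoxS; apply: eq_bigr => i _; rewrite /g3 BoxM.
  rewrite -!BoxD; apply: Box_ext => m1 m2 m3.
  exact: (pointwise u v p hp (lfun m1 m2 m3 t)).
have Ev : Box Ivf N = cnt (absz (t - Us u - (Vs v)%:Z)%R).
  apply: (@box_ThG u v t N) => //.
  rewrite abszE ger0_norm // /Us /Vs sum4.
  by rewrite !PoszD; lia.
rewrite Ev in E; rewrite E; congr addn.
apply: eq_bigr => i _.
congr muln.
apply: (@box_ThG u _ t N) => //.
have := Wc_compl p v i; rewrite sum4 => WE.
rewrite PoszD abszE ger0_norm // /Us.
have : ((Vs v)%:Z = ((p r1 != p i) * v r1 + (p r2 != p i) * v r2 + (p r3 != p i) * v r3 +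
         (p r4 != p i) * v r4)%:Z + (Wc p v i)%:Z)%R by rewrite -PoszD WE.
lia.
Qed.

Local Open Scope ring_scope.

Definition gz (x : int) : int := (x + 1) * (x + 2) * (x + 3).

Lemma cnt_int (M : nat) : 6 * (cnt M)%:Z = gz M%:Z.
Proof.
have := congr1 (fun n : nat => n%:Z) (sum_ind3 M); rewrite -/(cnt M) /= !PoszM => ->.
rewrite /gz; congr (_ * _ * _); lia.
Qed.

Lemma coeff (c1 c2 c3 d1 d2 d3 T : int) :
  (forall t, T <= t -> rr6 c1 c2 c3 t = rr6 d1 d2 d3 t) ->
  [/\ c1 = d1, c2 = d2 & c3 = d3].
Proof.
move=> H.
have H0 := H T (lexx T).
have H1 : rr6 c1 c2 c3 (T+1) = rr6 d1 d2 d3 (T+1) by apply: H; lia.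
have H2 : rr6 c1 c2 c3 (T+2) = rr6 d1 d2 d3 (T+2) by apply: H; lia.
have k1 : (rr6 c1 c2 c3 (T+2) - rr6 d1 d2 d3 (T+2)) - 2 * (rr6 c1 c2 c3 (T+1) - rr6 d1 d2 d3 (T+1))
   + (rr6 c1 c2 c3 T - rr6 d1 d2 d3 T) = 6 * (c1 - d1) by rewrite /rr6; ring.
have e1 : c1 = d1 by move: k1; rewrite H0 H1 H2; lia.
subst d1.
have k2 : (rr6 c1 c2 c3 (T+1) - rr6 c1 d2 d3 (T+1)) - (rr6 c1 c2 c3 T - rr6 c1 d2 d3 T)
   = - 6 * (c2 - d2) by rewrite /rr6; ring.
have e2 : c2 = d2 by move: k2; rewrite H0 H1; lia.
subst d2.
have k3 : rr6 c1 c2 c3 T - rr6 c1 c2 d3 T = 3 * (c3 - d3) by rewrite /rr6; ring.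
have e3 : c3 = d3 by move: k3; rewrite H0; lia.
by [].
Qed.

Lemma rr6_id (U s w1 w2 w3 w4 t : int) : s = t - U - (w1 + w2 + w3 + w4) ->
  gz (s + w1) + gz (s + w2) + gz (s + w3) + gz (s + w4) - 2 * gz s =
  rr6 (- 2 * U - (w1 + w2 + w3 + w4))
      (e2_4 w1 w2 w3 w4 + U * (U + (w1 + w2 + w3 + w4))) (e3_4 w1 w2 w3 w4) t.
Proof. move=> ->; rewrite /gz /rr6 /e2_4 /e3_4; ring. Qed.

Definition Wp (p : 'I_4 -> sub2) (v : 'I_4 -> nat) (i : 'I_4) : nat := (rep p i * Wc p v i)%N.

Lemma sumWp p v : (\sum_(i < 4) Wp p v i)%N = Vs v.
Proof.
rewrite /Wp /Wc /Vs.
rewrite (eq_bigr (fun i => \sum_(j < 4) (rep p i * ((p j == p i) * v j)))%N); last first.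
  by move=> i _; rewrite big_distrr.
rewrite exchange_big; apply: eq_bigr => j _.
rewrite (eq_bigr (fun i => (rep p i && (p i == p j)) * v j)%N); last first.
  by move=> i _; rewrite mulnA eq_sym; case: (rep p i); case: (p i == p j).
by rewrite -big_distrl /= rep_unique mul1n.
Qed.

Lemma h0_int V u v p t N : toric_data V u v p ->
  let s := t - Us u - (Vs v)%:Z in
  0 <= s -> (Bnd u t <= N)%N ->
  6 * (h0box V t N)%:Z = gz (s + (Wp p v r1)%:Z) + gz (s + (Wp p v r2)%:Z) +
     gz (s + (Wp p v r3)%:Z) + gz (s + (Wp p v r4)%:Z) - 2 * gz s.
Proof.
move=> hT s s0 BN.
have E := @h0_formula V u v p t N hT s0 BN.
rewrite /Rsum !sum4 in E.
have E' := congr1 (fun n : nat => n%:Z) E; rewrite /= !PoszD !PoszM in E'.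
have sE : (absz s)%:Z = s by rewrite abszE ger0_norm.
have C0 := cnt_int (absz s); rewrite sE in C0.
have C k : 6 * (cnt (absz s + Wc p v k))%:Z = gz (s + (Wc p v k)%:Z) by rewrite cnt_int PoszD sE.
have D k : (rep p k)%:Z * gz (s + (Wc p v k)%:Z) - (rep p k)%:Z * gz s = gz (s + (Wp p v k)%:Z) - gz s.
  by rewrite /Wp; case: (rep p k); rewrite /= ?mul1n ?mul0n ?mul1r ?mul0r ?addr0 ?subrr.
have C1 := C r1; have C2 := C r2; have C3 := C r3; have C4 := C r4.
have D1 := D r1; have D2 := D r2; have D3 := D r3; have D4 := D r4.
rewrite -/s in E'.
nia.
Qed.

Lemma sumWp4 p v : (Wp p v r1)%:Z + (Wp p v r2)%:Z + (Wp p v r3)%:Z + (Wp p v r4)%:Z = (Vs v)%:Z.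
Proof. by rewrite -(sumWp p v) sum4 !PoszD. Qed.

Lemma chern_vals V u v p c1 c2 c3 : toric_data V u v p -> chern V c1 c2 c3 ->
  let w1 := (Wp p v r1)%:Z in let w2 := (Wp p v r2)%:Z in
  let w3 := (Wp p v r3)%:Z in let w4 := (Wp p v r4)%:Z in
  [/\ c1 = - 2 * Us u - (Vs v)%:Z,
      c2 = e2_4 w1 w2 w3 w4 + Us u * (Us u + (Vs v)%:Z) & c3 = e3_4 w1 w2 w3 w4].
Proof.
move=> hT [t0 H] w1 w2 w3 w4.
have SW := sumWp4 p v; rewrite -/w1 -/w2 -/w3 -/w4 in SW.
rewrite -SW.
apply: (@coeff _ _ _ _ _ _ ((absz t0)%:Z + (absz (Us u + (Vs v)%:Z))%:Z)) => t tT.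
have [n [[N0 HN] En]] := H t ltac:(lia).
have hN := HN (maxn N0 (Bnd u t)) (leq_maxl _ _).
have s0 : 0 <= t - Us u - (Vs v)%:Z by lia.
have := @h0_int V u v p t (maxn N0 (Bnd u t)) hT s0 (leq_maxr _ _).
rewrite hN En -/w1 -/w2 -/w3 -/w4 => ->.
apply: rr6_id; lia.
Qed.

Local Open Scope ring_scope.

Lemma stab_W V u v p c1 c2 c3 : toric_data V u v p -> chern V c1 c2 c3 -> mu_stable V ->
  forall i, (2 * Wc p v i < Vs v)%N.
Proof.
move=> hT hC hS i.
have [e1 _ _] := @chern_vals V u v p c1 c2 c3 hT hC.
have hp : forall j, \dim (p j) = 1%N by move=> j; case: (hT j).
pose w := fun j => u j + ((p j != p i) * v j)%:Z.
have Hw : forall j l, \dim (V j l :&: p i)%VS = (w j <= l) :> nat.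
  move=> j l; rewrite (hT j).2 /w.
  case: ifP => h1.
    rewrite cap0v dimv0; case: leP => //; lia.
  case: ifP => h2.
    rewrite line_cap //; case: (boolP (p j == p i)) => [_|_] /=.
      by rewrite mul0n addr0; case: leP => //; lia.
    by rewrite mul1n; case: leP => //; lia.
  rewrite capfv hp; case: leP => //; case: (p j != p i); rewrite /= ?mul0n ?mul1n; lia.
have := hS c1 c2 c3 hC (p i) (hp i) w Hw.
rewrite sum4z /w e1 /Us.
have := Wc_compl p v i; rewrite sum4 => WE.
have WEz := congr1 (fun n : nat => n%:Z) WE; rewrite /= !PoszD in WEz.
lia.
Qed.

Local Open Scope ring_scope.

Lemma sort4 (w : 'I_4 -> int) : exists i1 i2 i3 i4, perm4 i1 i2 i3 i4 /\
  [/\ w i2 <= w i1, w i3 <= w i2 & w i4 <= w i3].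
Proof.
case: (lerP (w r1) (w r2)) => h01.
-
  case: (lerP (w r1) (w r3)) => h02.
    +
    case: (lerP (w r1) (w r4)) => h03.
        *
      case: (lerP (w r2) (w r3)) => h12.
            --
        case: (lerP (w r2) (w r4)) => h13.
                ++
          case: (lerP (w r3) (w r4)) => h23.
                    **
            by exists r4, r3, r2, r1; split; [by [] | split; lia].
          **
            by exists r3, r4, r2, r1; split; [by [] | split; lia].
        ++
          case: (lerP (w r3) (w r4)) => h23.
                    **
            exfalso; lia.
          **
            by exists r3, r2, r4, r1; split; [by [] | split; lia].
      --
        case: (lerP (w r2) (w r4)) => h13.
                ++
          case: (lerP (w r3) (w r4)) => h23.
                    **
            by exists r4, r2, r3, r1; split; [by [] | split; lia].
          **
            exfalso; lia.
        ++
          case: (lerP (w r3) (w r4)) => h23.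
                    **
            by exists r2, r4, r3, r1; split; [by [] | split; lia].
          **
            by exists r2, r3, r4, r1; split; [by [] | split; lia].
    *
      case: (lerP (w r2) (w r3)) => h12.
            --
        case: (lerP (w r2) (w r4)) => h13.
                ++
          case: (lerP (w r3) (w r4)) => h23.
                    **
            exfalso; lia.
          **
            exfalso; lia.
        ++
          case: (lerP (w r3) (w r4)) => h23.
                    **
            exfalso; lia.
          **
            by exists r3, r2, r1, r4; split; [by [] | split; lia].
      --
        case: (lerP (w r2) (w r4)) => h13.
                ++
          case: (lerP (w r3) (w r4)) => h23.
                    **
            exfalso; lia.
          **
            exfalso; lia.
        ++
          case: (lerP (w r3) (w r4)) => h23.
                    **
            exfalso; lia.
          **
            by exists r2, r3, r1, r4; split; [by [] | split; lia].
  +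
    case: (lerP (w r1) (w r4)) => h03.
        *
      case: (lerP (w r2) (w r3)) => h12.
            --
        case: (lerP (w r2) (w r4)) => h13.
                ++
          case: (lerP (w r3) (w r4)) => h23.
                    **
            exfalso; lia.
          **
            exfalso; lia.
        ++
          case: (lerP (w r3) (w r4)) => h23.
                    **
            exfalso; lia.
          **
            exfalso; lia.
      --
        case: (lerP (w r2) (w r4)) => h13.
                ++
          case: (lerP (w r3) (w r4)) => h23.
                    **
            by exists r4, r2, r1, r3; split; [by [] | split; lia].
          **
            exfalso; lia.
        ++
          case: (lerP (w r3) (w r4)) => h23.
                    **
            by exists r2, r4, r1, r3; split; [by [] | split; lia].
          **
            exfalso; lia.
    *
      case: (lerP (w r2) (w r3)) => h12.
            --
        case: (lerP (w r2) (w r4)) => h13.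
                ++
          case: (lerP (w r3) (w r4)) => h23.
                    **
            exfalso; lia.
          **
            exfalso; lia.
        ++
          case: (lerP (w r3) (w r4)) => h23.
                    **
            exfalso; lia.
          **
            exfalso; lia.
      --
        case: (lerP (w r2) (w r4)) => h13.
                ++
          case: (lerP (w r3) (w r4)) => h23.
                    **
            exfalso; lia.
          **
            exfalso; lia.
        ++
          case: (lerP (w r3) (w r4)) => h23.
                    **
            by exists r2, r1, r4, r3; split; [by [] | split; lia].
          **
            by exists r2, r1, r3, r4; split; [by [] | split; lia].
-
  case: (lerP (w r1) (w r3)) => h02.
    +
    case: (lerP (w r1) (w r4)) => h03.
        *
      case: (lerP (w r2) (w r3)) => h12.
            --
        case: (lerP (w r2) (w r4)) => h13.
                ++
          case: (lerP (w r3) (w r4)) => h23.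
                    **
            by exists r4, r3, r1, r2; split; [by [] | split; lia].
          **
            by exists r3, r4, r1, r2; split; [by [] | split; lia].
        ++
          case: (lerP (w r3) (w r4)) => h23.
                    **
            exfalso; lia.
          **
            exfalso; lia.
      --
        case: (lerP (w r2) (w r4)) => h13.
                ++
          case: (lerP (w r3) (w r4)) => h23.
                    **
            exfalso; lia.
          **
            exfalso; lia.
        ++
          case: (lerP (w r3) (w r4)) => h23.
                    **
            exfalso; lia.
          **
            exfalso; lia.
    *
      case: (lerP (w r2) (w r3)) => h12.
            --
        case: (lerP (w r2) (w r4)) => h13.
                ++
          case: (lerP (w r3) (w r4)) => h23.
                    **
            exfalso; lia.
          **
            by exists r3, r1, r4, r2; split; [by [] | split; lia].
        ++
          case: (lerP (w r3) (w r4)) => h23.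
                    **
            exfalso; lia.
          **
            by exists r3, r1, r2, r4; split; [by [] | split; lia].
      --
        case: (lerP (w r2) (w r4)) => h13.
                ++
          case: (lerP (w r3) (w r4)) => h23.
                    **
            exfalso; lia.
          **
            exfalso; lia.
        ++
          case: (lerP (w r3) (w r4)) => h23.
                    **
            exfalso; lia.
          **
            exfalso; lia.
  +
    case: (lerP (w r1) (w r4)) => h03.
        *
      case: (lerP (w r2) (w r3)) => h12.
            --
        case: (lerP (w r2) (w r4)) => h13.
                ++
          case: (lerP (w r3) (w r4)) => h23.
                    **
            by exists r4, r1, r3, r2; split; [by [] | split; lia].
          **
            exfalso; lia.
        ++
          case: (lerP (w r3) (w r4)) => h23.
                    **
            exfalso; lia.
          **
            exfalso; lia.
      --
        case: (lerP (w r2) (w r4)) => h13.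
                ++
          case: (lerP (w r3) (w r4)) => h23.
                    **
            by exists r4, r1, r2, r3; split; [by [] | split; lia].
          **
            exfalso; lia.
        ++
          case: (lerP (w r3) (w r4)) => h23.
                    **
            exfalso; lia.
          **
            exfalso; lia.
    *
      case: (lerP (w r2) (w r3)) => h12.
            --
        case: (lerP (w r2) (w r4)) => h13.
                ++
          case: (lerP (w r3) (w r4)) => h23.
                    **
            by exists r1, r4, r3, r2; split; [by [] | split; lia].
          **
            by exists r1, r3, r4, r2; split; [by [] | split; lia].
        ++
          case: (lerP (w r3) (w r4)) => h23.
                    **
            exfalso; lia.
          **
            by exists r1, r3, r2, r4; split; [by [] | split; lia].
      --
        case: (lerP (w r2) (w r4)) => h13.
                ++
          case: (lerP (w r3) (w r4)) => h23.
                    **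
            by exists r1, r4, r2, r3; split; [by [] | split; lia].
          **
            exfalso; lia.
        ++
          case: (lerP (w r3) (w r4)) => h23.
                    **
            by exists r1, r2, r4, r3; split; [by [] | split; lia].
          **
            by exists r1, r2, r3, r4; split; [by [] | split; lia].

Qed.

Ltac ord4_destruct i := case: (ord4_cases i) => ->.

Lemma sum_perm4 (F : 'I_4 -> int) i j k l : perm4 i j k l ->
  \sum_(x < 4) F x = F i + F j + F k + F l.
Proof.
rewrite sum4z; ord4_destruct i; ord4_destruct j; ord4_destruct k; ord4_destruct l;
  rewrite /perm4 /= => // _; ring.
Qed.

Lemma sum_perm4n (F : 'I_4 -> nat) i j k l : perm4 i j k l ->
  (\sum_(x < 4) F x = F i + F j + F k + F l)%N.
Proof.
rewrite sum4; ord4_destruct i; ord4_destruct j; ord4_destruct k; ord4_destruct l;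
  rewrite /perm4 /= => // _; lia.
Qed.

Lemma perm4_neq i j k l : perm4 i j k l ->
  i != j /\ i != k /\ i != l /\ j != k /\ j != l /\ k != l.
Proof.
ord4_destruct i; ord4_destruct j; ord4_destruct k; ord4_destruct l; by rewrite /perm4 /=.
Qed.

Lemma perm4_fourth j k l : j != k -> j != l -> k != l -> exists m, perm4 m j k l.
Proof.
ord4_destruct j; ord4_destruct k; ord4_destruct l; rewrite //= => _ _ _;
  first [ by exists r1 | by exists r2 | by exists r3 | by exists r4 ].
Qed.

Lemma rep_distinct p x y : rep p x -> rep p y -> x != y -> p x != p y.
Proof.
move=> /forallP hx /forallP hy nxy.
case: (ltngtP x y) => h.
- by move: (hy x); rewrite h.
- by move: (hx y); rewrite h eq_sym.
- by exfalso; move/eqP: nxy; apply; apply: val_inj.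
Qed.

Lemma Wp_pos p v x : (0 < Wp p v x)%N -> rep p x /\ Wp p v x = Wc p v x.
Proof. by rewrite /Wp; case: (rep p x); rewrite ?mul1n ?mul0n. Qed.

Lemma Wp_le p v x : (Wp p v x <= Wc p v x)%N.
Proof. by rewrite /Wp; case: (rep p x); rewrite ?mul1n ?mul0n. Qed.

Lemma Wc_eq p v x y : p x = p y -> Wc p v x = Wc p v y.
Proof. by rewrite /Wc => ->. Qed.

Lemma pow_sum p v (f : nat -> nat) :
  (\sum_(i < 4) rep p i * (Wc p v i * f (Wc p v i)) = \sum_(j < 4) v j * f (Wc p v j))%N.
Proof.
rewrite {1}/Wc.
rewrite (eq_bigr (fun i => \sum_(j < 4) rep p i * ((p j == p i) * v j) * f (Wc p v i))%N); last first.
  move=> i _; rewrite big_distrl big_distrr /=; apply: eq_bigr => j _; by rewrite mulnA.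
rewrite exchange_big; apply: eq_bigr => j _.
rewrite (eq_bigr (fun i => (rep p i && (p i == p j)) * (v j * f (Wc p v j)))%N); last first.
  move=> i _; case: (boolP (p i == p j)) => [/eqP e|ne].
    by rewrite (@Wc_eq p v i j e) eq_sym e eqxx andbT mul1n mulnA.
  by rewrite eq_sym (negbTE ne) andbF !mul0n muln0.
by rewrite -big_distrl /= rep_unique mul1n.
Qed.

Lemma P2_eq p v : (\sum_(i < 4) Wp p v i ^ 2 = \sum_(j < 4) v j * Wc p v j)%N.
Proof.
rewrite -(pow_sum p v id); apply: eq_bigr => i _.
by rewrite /Wp; case: (rep p i); rewrite ?mul1n ?mul0n //= expnS expn1.
Qed.

Lemma P3_eq p v : (\sum_(i < 4) Wp p v i ^ 3 = \sum_(j < 4) v j * Wc p v j ^ 2)%N.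
Proof.
rewrite -(pow_sum p v (fun x => x ^ 2)%N); apply: eq_bigr => i _.
by rewrite /Wp; case: (rep p i); rewrite ?mul1n ?mul0n //= !expnS expn0 !muln1.
Qed.

Lemma e2_perm (w : 'I_4 -> int) i j k l : perm4 i j k l ->
  e2_4 (w r1) (w r2) (w r3) (w r4) = e2_4 (w i) (w j) (w k) (w l).
Proof.
move=> P.
have A := @sum_perm4 w _ _ _ _ P; have B := @sum_perm4 (fun x => w x ^+ 2) _ _ _ _ P.
rewrite !sum4z /= in A B.
have E : forall a b c d, 2 * e2_4 a b c d = (a+b+c+d)^+2 - (a^+2+b^+2+c^+2+d^+2).
  by move=> a b c d; rewrite /e2_4; ring.
apply: (@mulfI _ 2) => //; rewrite E E.
by rewrite A B.
Qed.

Lemma e3_perm (w : 'I_4 -> int) i j k l : perm4 i j k l ->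
  e3_4 (w r1) (w r2) (w r3) (w r4) = e3_4 (w i) (w j) (w k) (w l).
Proof.
move=> P.
have A := @sum_perm4 w _ _ _ _ P; have B := @sum_perm4 (fun x => w x ^+ 2) _ _ _ _ P.
have C := @sum_perm4 (fun x => w x ^+ 3) _ _ _ _ P.
rewrite !sum4z /= in A B C.
have E : forall a b c d, 6 * e3_4 a b c d = (a+b+c+d)^+3 -
    3 * (a+b+c+d) * (a^+2+b^+2+c^+2+d^+2) + 2 * (a^+3+b^+3+c^+3+d^+3).
  by move=> a b c d; rewrite /e3_4; ring.
apply: (@mulfI _ 6) => //; rewrite E E.
by rewrite A B C.
Qed.

Local Open Scope ring_scope.

Lemma par2 (x : int) : exists a r, x = a * 2 + r /\ (r = 0 \/ r = 1).
Proof.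
exists (x %/ 2)%Z, (x %% 2)%Z; split; first exact: divz_eq.
have := @modz_ge0 x 2 isT; have := @ltz_pmod x 2 isT; lia.
Qed.

Lemma ev2 (x y : int) : exists q, x * y * (x + y) = q * 2.
Proof.
have [a [r [-> hr]]] := par2 x; have [b [s [-> hs]]] := par2 y.
case: hr => ->; case: hs => ->.
- by exists (a * b * (a + b) * 4); ring.
- by exists (a * (b * 2 + 1) * (a * 2 + b * 2 + 1)); ring.
- by exists ((a * 2 + 1) * b * (a * 2 + b * 2 + 1)); ring.
- by exists ((a * 2 + 1) * (b * 2 + 1) * (a + b + 1)); ring.
Qed.

Lemma parity (U V w1 w2 w3 w4 : int) : V = w1 + w2 + w3 + w4 ->
  (2 %| e3_4 w1 w2 w3 w4 - (- 2 * U - V) * (e2_4 w1 w2 w3 w4 + U * (U + V)))%Z.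
Proof.
move=> VE.
have [q1 H1] := ev2 w1 w2; have [q2 H2] := ev2 w1 w3; have [q3 H3] := ev2 w1 w4.
have [q4 H4] := ev2 w2 w3; have [q5 H5] := ev2 w2 w4; have [q6 H6] := ev2 w3 w4.
have [q7 H7] := ev2 U V.
apply/dvdzP; exists (2 * e3_4 w1 w2 w3 w4 + U * (e2_4 w1 w2 w3 w4 + U * (U + V))
   + q1 + q2 + q3 + q4 + q5 + q6 + q7).
have id : e3_4 w1 w2 w3 w4 - (- 2 * U - V) * (e2_4 w1 w2 w3 w4 + U * (U + V)) =
  2 * 2 * e3_4 w1 w2 w3 w4 + w1 * w2 * (w1 + w2) + w1 * w3 * (w1 + w3) + w1 * w4 * (w1 + w4)
  + w2 * w3 * (w2 + w3) + w2 * w4 * (w2 + w4) + w3 * w4 * (w3 + w4) + U * V * (U + V)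
  + 2 * U * (e2_4 w1 w2 w3 w4 + U * (U + V)).
  by rewrite VE /e2_4 /e3_4; ring.
rewrite id H1 H2 H3 H4 H5 H6 H7; ring.
Qed.

Local Close Scope ring_scope.

Definition A_odd (p : 'I_4 -> sub2) (v : 'I_4 -> nat) : Prop :=
  exists i j k l : 'I_4, [/\ perm4 i j k l, p i = p j,
             [/\ p j != p k, p j != p l & p k != p l] &
             [/\ (1 <= v i)%N, (1 <= v j)%N, v k = 1%N & (v i + v j)%N = v l]].
Definition B_odd (p : 'I_4 -> sub2) (v : 'I_4 -> nat) : Prop :=
  exists i j k l : 'I_4, [/\ perm4 i j k l, v i = 0%N,
             [/\ p j != p k, p j != p l & p k != p l],
             v j = 1%N & v k = v l /\ (1 <= v k)%N].
Definition A_even (p : 'I_4 -> sub2) (v : 'I_4 -> nat) : Prop :=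
  (forall i j : 'I_4, i != j -> p i != p j) /\ (forall i, v i = 1%N).
Definition B_even (p : 'I_4 -> sub2) (v : 'I_4 -> nat) : Prop :=
  exists i j k l : 'I_4, [/\ perm4 i j k l, p i = p j,
                 [/\ p j != p k, p j != p l & p k != p l],
                 v i = 1%N /\ v j = 1%N & v k = 2%N /\ v l = 2%N].
Definition C_even (p : 'I_4 -> sub2) (v : 'I_4 -> nat) : Prop :=
  exists i j k l : 'I_4, [/\ perm4 i j k l, v i = 0%N,
                 [/\ p j != p k, p j != p l & p k != p l]
               & [/\ v j = 2%N, v k = 2%N & v l = 2%N]].

Lemma perm4_of_neq (a b c d : 'I_4) : a != b -> a != c -> a != d -> b != c -> b != d -> c != d ->
  perm4 a b c d.
Proof.
move=> ab ac ad bc bd cd; rewrite /perm4 /= !inE !negb_or.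
by rewrite ab ac ad bc bd cd.
Qed.

Lemma Wc4 p v m j k l x : perm4 m j k l ->
  Wc p v x = (p m == p x) * v m + (p j == p x) * v j + (p k == p x) * v k + (p l == p x) * v l.
Proof. by move=> P; rewrite /Wc (@sum_perm4n (fun z => (p z == p x) * v z) _ _ _ _ P). Qed.

Lemma Vs4 v m j k l : perm4 m j k l -> Vs v = v m + v j + v k + v l.
Proof. by move=> P; rewrite /Vs (@sum_perm4n v _ _ _ _ P). Qed.

Lemma setup3 p v j k l a b c : j != k -> j != l -> k != l ->
  Wp p v j = a -> Wp p v k = b -> Wp p v l = c -> 0 < a -> 0 < b -> 0 < c ->
  exists m, [/\ perm4 m j k l, [/\ p j != p k, p j != p l & p k != p l],
     [/\ Wc p v j = a, Wc p v k = b & Wc p v l = c] &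
     [/\ m != j, m != k & m != l]].
Proof.
move=> jk jl kl Wj Wk Wl a0 b0 c0.
have [rj Wj'] := @Wp_pos p v j ltac:(lia).
have [rk Wk'] := @Wp_pos p v k ltac:(lia).
have [rl Wl'] := @Wp_pos p v l ltac:(lia).
have [m Pm] := @perm4_fourth j k l jk jl kl.
exists m; split => //.
- by split; apply: (@rep_distinct p).
- by split; congruence.
- by have := @perm4_neq _ _ _ _ Pm; case=> ? [? [? _]].
Qed.

Ltac pneq := apply: perm4_of_neq; first [done | by rewrite eq_sym].
Ltac L := repeat match goal with
  | H : is_true (_ != _) |- _ => clear H
  | H : is_true (perm4 _ _ _ _) |- _ => clear H
  | H : (_ == _) = false |- _ => clear H
  | H : is_true (_ == _) |- _ => clear H
  | H : @eq sub2 _ _ |- _ => clear H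
  end; lia.

Lemma fwd_odd p v (h : nat) j k l : j != k -> j != l -> k != l ->
  Wp p v j = 1 -> Wp p v k = h -> Wp p v l = h -> 0 < h -> Vs v = 2 * h + 1 ->
  A_odd p v \/ B_odd p v.
Proof.
move=> jk jl kl Wj Wk Wl h0 VE.
have [m [Pm [pjk pjl pkl] [Ej Ek El] [mj mk ml]]] := @setup3 p v j k l 1 h h jk jl kl Wj Wk Wl isT h0 h0.
have VE' := @Vs4 v _ _ _ _ Pm.
have nkj : (p k == p j) = false by rewrite eq_sym (negbTE pjk).
have nlj : (p l == p j) = false by rewrite eq_sym (negbTE pjl).
have nlk : (p l == p k) = false by rewrite eq_sym (negbTE pkl).
have njk := negbTE pjk; have njl := negbTE pjl; have nkl := negbTE pkl.
have Ej' := @Wc4 p v _ _ _ _ j Pm; rewrite Ej eqxx nkj nlj in Ej'.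
have Ek' := @Wc4 p v _ _ _ _ k Pm; rewrite Ek eqxx njk nlk in Ek'.
have El' := @Wc4 p v _ _ _ _ l Pm; rewrite El eqxx njl nkl in El'.
have d0 : [/\ p j != p k, p j != p l & p k != p l] by [].
case: (boolP (p m == p j)) => [/eqP ePj|nmj].
  rewrite ?ePj ?eqxx ?nkj ?nlk ?njk ?nlj ?njl ?nkl /= in Ej' Ek' El'.
  case: (posnP (v m)) => vm0.
    right; exists m, j, k, l; split; [done | L | done | L | split; L].
  right; exists j, m, k, l; split; [pneq | L | | L | split; L].
  by rewrite -ePj in pjk pjl.
case: (boolP (p m == p k)) => [/eqP ePk|nmk].
  rewrite ?ePk ?eqxx ?nkj ?nlk ?njk ?nlj ?njl ?nkl /= in Ej' Ek' El'.
  case: (posnP (v m)) => vm0.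
    right; exists m, j, k, l; split; [done | L | done | L | split; L].
  case: (posnP (v k)) => vk0.
    right; exists k, j, m, l; split; [pneq | L | | L | split; L].
    by rewrite ePk.
  left; exists k, m, j, l; split; [pneq | done | | split; L].
  by rewrite ePk eq_sym.
case: (boolP (p m == p l)) => [/eqP ePl|nml].
  rewrite ?ePl ?eqxx ?nkj ?nlk ?njk ?nlj ?njl ?nkl /= in Ej' Ek' El'.
  case: (posnP (v m)) => vm0.
    right; exists m, j, k, l; split; [done | L | done | L | split; L].
  case: (posnP (v l)) => vl0.
    right; exists l, j, k, m; split; [pneq | L | | L | split; L].
    by rewrite ePl; split => //; rewrite eq_sym.
  left; exists l, m, j, k; split; [pneq | done | | split; L].
  by rewrite ePl; split => //; rewrite eq_sym.
rewrite ?(negbTE nmj) ?(negbTE nmk) ?(negbTE nml) /= in Ej' Ek' El'.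
right; exists m, j, k, l; split; [done | L | done | L | split; L].
Qed.

Lemma fwd_even2 p v j k l : j != k -> j != l -> k != l ->
  Wp p v j = 2 -> Wp p v k = 2 -> Wp p v l = 2 -> Vs v = 6 ->
  B_even p v \/ C_even p v.
Proof.
move=> jk jl kl Wj Wk Wl VE.
have [m [Pm [pjk pjl pkl] [Ej Ek El] [mj mk ml]]] := @setup3 p v j k l 2 2 2 jk jl kl Wj Wk Wl isT isT isT.
have VE' := @Vs4 v _ _ _ _ Pm.
have nkj : (p k == p j) = false by rewrite eq_sym (negbTE pjk).
have nlj : (p l == p j) = false by rewrite eq_sym (negbTE pjl).
have nlk : (p l == p k) = false by rewrite eq_sym (negbTE pkl).
have njk := negbTE pjk; have njl := negbTE pjl; have nkl := negbTE pkl.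
have Ej' := @Wc4 p v _ _ _ _ j Pm; rewrite Ej eqxx nkj nlj in Ej'.
have Ek' := @Wc4 p v _ _ _ _ k Pm; rewrite Ek eqxx njk nlk in Ek'.
have El' := @Wc4 p v _ _ _ _ l Pm; rewrite El eqxx njl nkl in El'.
have d0 : [/\ p j != p k, p j != p l & p k != p l] by [].
case: (boolP (p m == p j)) => [/eqP ePj|nmj].
  rewrite ?ePj ?eqxx ?nkj ?nlk ?njk ?nlj ?njl ?nkl /= in Ej' Ek' El'.
  case: (posnP (v m)) => vm0.
    right; exists m, j, k, l; split; [done | L | done | split; L].
  case: (posnP (v j)) => vj0.
    right; exists j, m, k, l; split; [pneq | L | | split; L].
    by rewrite -ePj in pjk pjl.
  left; exists m, j, k, l; split; [done | done | done | split; L | split; L].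
case: (boolP (p m == p k)) => [/eqP ePk|nmk].
  rewrite ?ePk ?eqxx ?nkj ?nlk ?njk ?nlj ?njl ?nkl /= in Ej' Ek' El'.
  case: (posnP (v m)) => vm0.
    right; exists m, j, k, l; split; [done | L | done | split; L].
  case: (posnP (v k)) => vk0.
    right; exists k, j, m, l; split; [pneq | L | | split; L].
    by rewrite ePk.
  left; exists m, k, j, l; split; [pneq | done | | split; L | split; L].
  by rewrite eq_sym; split => //; rewrite eq_sym.
case: (boolP (p m == p l)) => [/eqP ePl|nml].
  rewrite ?ePl ?eqxx ?nkj ?nlk ?njk ?nlj ?njl ?nkl /= in Ej' Ek' El'.
  case: (posnP (v m)) => vm0.
    right; exists m, j, k, l; split; [done | L | done | split; L].
  case: (posnP (v l)) => vl0.
    right; exists l, j, k, m; split; [pneq | L | | split; L].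
    by rewrite ePl.
  left; exists m, l, j, k; split; [pneq | done | | split; L | split; L].
  by rewrite !(eq_sym (p l)); split.
rewrite ?(negbTE nmj) ?(negbTE nmk) ?(negbTE nml) /= in Ej' Ek' El'.
right; exists m, j, k, l; split; [done | L | done | split; L].
Qed.

Lemma Wc_distinct p v x : (forall i j : 'I_4, i != j -> p i != p j) -> Wc p v x = v x.
Proof.
move=> D; rewrite /Wc (eq_bigr (fun z => (z == x) * v z)); last first.
  move=> z _; case: (boolP (z == x)) => [/eqP -> | ne]; first by rewrite !eqxx.
  by rewrite (negbTE (D _ _ ne)).
rewrite (eq_bigr (fun z => if z == x then v z else 0)); last first.
  by move=> z _; case: (z == x); rewrite ?mul1n ?mul0n.
by rewrite -big_mkcond big_pred1_eq.
Qed.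

Lemma fwd_even1 p v : (forall x, Wp p v x = 1) -> A_even p v.
Proof.
move=> W.
have R x : rep p x /\ Wp p v x = Wc p v x by apply: Wp_pos; rewrite W.
have D : forall i j : 'I_4, i != j -> p i != p j.
  by move=> i j ij; apply: rep_distinct => //; [case: (R i) | case: (R j)].
split => // x; rewrite -(@Wc_distinct p v x D); case: (R x) => _ <-; exact: W.
Qed.

Definition P2s p v := \sum_(j < 4) v j * Wc p v j.
Definition P3s p v := \sum_(j < 4) v j * Wc p v j ^ 2.

Lemma Wc4eqs p v i j k l : perm4 i j k l -> [/\
  Wc p v i = (p i == p i) * v i + (p j == p i) * v j + (p k == p i) * v k + (p l == p i) * v l,
  Wc p v j = (p i == p j) * v i + (p j == p j) * v j + (p k == p j) * v k + (p l == p j) * v l,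
  Wc p v k = (p i == p k) * v i + (p j == p k) * v j + (p k == p k) * v k + (p l == p k) * v l &
  Wc p v l = (p i == p l) * v i + (p j == p l) * v j + (p k == p l) * v k + (p l == p l) * v l].
Proof. by move=> P; split; apply: Wc4. Qed.

Lemma bwd_odd p v : A_odd p v \/ B_odd p v ->
  exists A : nat, [/\ Vs v = 2 * A + 1, P2s p v = 2 * A ^ 2 + 1 & P3s p v = 2 * A ^ 3 + 1].
Proof.
case=> [[i [j [k [l [P ePij [pjk pjl pkl] [vi vj vk vl]]]]]] | [i [j [k [l [P vi0 [pjk pjl pkl] vj [vkl vk]]]]]]].
- have nkj : (p k == p j) = false by rewrite eq_sym (negbTE pjk).
  have nlj : (p l == p j) = false by rewrite eq_sym (negbTE pjl).
  have nlk : (p l == p k) = false by rewrite eq_sym (negbTE pkl).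
  have njk := negbTE pjk; have njl := negbTE pjl; have nkl := negbTE pkl.
  have [Ei Ej Ek El] := @Wc4eqs p v _ _ _ _ P.
  rewrite ePij !eqxx ?nkj ?nlk ?njk ?nlj ?njl ?nkl /= in Ei Ej Ek El.
  exists (v l); split.
  + rewrite (@Vs4 v _ _ _ _ P); lia.
  + rewrite /P2s (@sum_perm4n (fun x => v x * Wc p v x) _ _ _ _ P) /= Ei Ej Ek El; nia.
  + rewrite /P3s (@sum_perm4n (fun x => v x * Wc p v x ^ 2) _ _ _ _ P) /= Ei Ej Ek El; nia.
- have nkj : (p k == p j) = false by rewrite eq_sym (negbTE pjk).
  have nlj : (p l == p j) = false by rewrite eq_sym (negbTE pjl).
  have nlk : (p l == p k) = false by rewrite eq_sym (negbTE pkl).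
  have njk := negbTE pjk; have njl := negbTE pjl; have nkl := negbTE pkl.
  have [Ei Ej Ek El] := @Wc4eqs p v _ _ _ _ P.
  rewrite vi0 !muln0 !eqxx ?nkj ?nlk ?njk ?nlj ?njl ?nkl /= in Ei Ej Ek El.
  exists (v k); split.
  + rewrite (@Vs4 v _ _ _ _ P); lia.
  + rewrite /P2s (@sum_perm4n (fun x => v x * Wc p v x) _ _ _ _ P) /= Ej Ek El vi0; nia.
  + rewrite /P3s (@sum_perm4n (fun x => v x * Wc p v x ^ 2) _ _ _ _ P) /= Ej Ek El vi0; nia.
Qed.

Lemma bwd_even p v : [\/ A_even p v, B_even p v | C_even p v] ->
  (Vs v = 4 /\ P2s p v = 4 /\ P3s p v = 4) \/ (Vs v = 6 /\ P2s p v = 12 /\ P3s p v = 24).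
Proof.
case=> [[D V1]|[i [j [k [l [P ePij [pjk pjl pkl] [vi vj] [vk vl]]]]]]|[i [j [k [l [P vi0 [pjk pjl pkl] [vj vk vl]]]]]]].
- left.
  have W x : Wc p v x = 1 by rewrite Wc_distinct.
  rewrite /Vs /P2s /P3s !sum4 !W !V1; by [].
- right.
  have nkj : (p k == p j) = false by rewrite eq_sym (negbTE pjk).
  have nlj : (p l == p j) = false by rewrite eq_sym (negbTE pjl).
  have nlk : (p l == p k) = false by rewrite eq_sym (negbTE pkl).
  have njk := negbTE pjk; have njl := negbTE pjl; have nkl := negbTE pkl.
  have [Ei Ej Ek El] := @Wc4eqs p v _ _ _ _ P.
  rewrite ePij !eqxx ?nkj ?nlk ?njk ?nlj ?njl ?nkl /= in Ei Ej Ek El.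
  rewrite /P2s /P3s (@Vs4 v _ _ _ _ P) (@sum_perm4n (fun x => v x * Wc p v x) _ _ _ _ P)
     (@sum_perm4n (fun x => v x * Wc p v x ^ 2) _ _ _ _ P) /= Ei Ej Ek El vi vj vk vl.
  by [].
- right.
  have nkj : (p k == p j) = false by rewrite eq_sym (negbTE pjk).
  have nlj : (p l == p j) = false by rewrite eq_sym (negbTE pjl).
  have nlk : (p l == p k) = false by rewrite eq_sym (negbTE pkl).
  have njk := negbTE pjk; have njl := negbTE pjl; have nkl := negbTE pkl.
  have [Ei Ej Ek El] := @Wc4eqs p v _ _ _ _ P.
  rewrite vi0 !muln0 !eqxx ?nkj ?nlk ?njk ?nlj ?njl ?nkl /= in Ei Ej Ek El.
  rewrite /P2s /P3s (@Vs4 v _ _ _ _ P) (@sum_perm4n (fun x => v x * Wc p v x) _ _ _ _ P)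
     (@sum_perm4n (fun x => v x * Wc p v x ^ 2) _ _ _ _ P) /= Ej Ek El vi0 vj vk vl.
  by [].
Qed.

Local Open Scope ring_scope.

Lemma natz2 (n : nat) : ((n ^ 2)%N)%:Z = n%:Z ^+ 2.
Proof. by rewrite -natz natrX natz. Qed.
Lemma natz3 (n : nat) : ((n ^ 3)%N)%:Z = n%:Z ^+ 3.
Proof. by rewrite -natz natrX natz. Qed.

Lemma arith_odd (U Vz P2 P3 c2 c3 A : int) : -1 = - 2 * U - Vz ->
  2 * (c2 - U * (U + Vz)) = Vz ^+ 2 - P2 -> 6 * c3 = Vz ^+ 3 - 3 * Vz * P2 + 2 * P3 ->
  Vz = 2 * A + 1 -> P2 = 2 * A ^+ 2 + 1 -> P3 = 2 * A ^+ 3 + 1 -> c3 = c2 ^+ 2.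
Proof.
move=> h1 h2 h3 h4 h5 h6.
have hU : U = - A by lia.
subst U Vz P2 P3.
have hc2 : 2 * c2 = 2 * A.
  have -> : 2 * c2 = (2 * A + 1) ^+ 2 - (2 * A ^+ 2 + 1) + 2 * (- A * (- A + (2 * A + 1))).
    by rewrite -h2; ring.
  ring.
have hc3 : 6 * c3 = 6 * A ^+ 2 by rewrite h3; ring.
have -> : c2 = A by apply: (@mulfI _ 2).
by apply: (@mulfI _ 6).
Qed.

Lemma arith_even (U Vz P2 P3 c2 c3 : int) : 0 = - 2 * U - Vz ->
  2 * (c2 - U * (U + Vz)) = Vz ^+ 2 - P2 -> 6 * c3 = Vz ^+ 3 - 3 * Vz * P2 + 2 * P3 ->
  (Vz = 4 /\ P2 = 4 /\ P3 = 4) \/ (Vz = 6 /\ P2 = 12 /\ P3 = 24) ->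
  c3 = c2 ^+ 2 - c2 + 2.
Proof.
move=> h1 h2 h3 [[h4 [h5 h6]]|[h4 [h5 h6]]]; subst Vz P2 P3.
- have hU : U = -2 by lia.
  subst U; have hc2 : c2 = 2 by lia.
  have hc3 : c3 = 4 by lia.
  by subst.
- have hU : U = -3 by lia.
  subst U; have hc2 : c2 = 3 by lia.
  have hc3 : c3 = 8 by lia.
  by subst.
Qed.

Lemma e2_id (a b c d U : int) :
  2 * (e2_4 a b c d + U * (U + (a + b + c + d)) - U * (U + (a + b + c + d))) =
  (a + b + c + d) ^+ 2 - (a ^+ 2 + b ^+ 2 + c ^+ 2 + d ^+ 2).
Proof. rewrite /e2_4; ring. Qed.

Lemma e3_id (a b c d : int) :
  6 * e3_4 a b c d = (a + b + c + d) ^+ 3 - 3 * (a + b + c + d) * (a ^+ 2 + b ^+ 2 + c ^+ 2 + d ^+ 2)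
   + 2 * (a ^+ 3 + b ^+ 3 + c ^+ 3 + d ^+ 3).
Proof. rewrite /e3_4; ring. Qed.

Lemma e_from_P V u v p c1 c2 c3 : toric_data V u v p -> chern V c1 c2 c3 ->
  [/\ c1 = - 2 * Us u - (Vs v)%:Z,
      2 * (c2 - Us u * (Us u + (Vs v)%:Z)) = (Vs v)%:Z ^+ 2 - (P2s p v)%:Z &
      6 * c3 = (Vs v)%:Z ^+ 3 - 3 * (Vs v)%:Z * (P2s p v)%:Z + 2 * (P3s p v)%:Z].
Proof.
move=> hT hC.
have [E1 E2 E3] := @chern_vals V u v p c1 c2 c3 hT hC.
have SW := sumWp4 p v.
have Q2' : (P2s p v = \sum_(i < 4) Wp p v i ^ 2)%N := esym (P2_eq p v).
have Q3' : (P3s p v = \sum_(i < 4) Wp p v i ^ 3)%N := esym (P3_eq p v).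
have Q2 : (P2s p v)%:Z = (Wp p v r1)%:Z ^+ 2 + (Wp p v r2)%:Z ^+ 2 + (Wp p v r3)%:Z ^+ 2 +
   (Wp p v r4)%:Z ^+ 2 by rewrite Q2' sum4 !PoszD !natz2.
have Q3 : (P3s p v)%:Z = (Wp p v r1)%:Z ^+ 3 + (Wp p v r2)%:Z ^+ 3 + (Wp p v r3)%:Z ^+ 3 +
   (Wp p v r4)%:Z ^+ 3 by rewrite Q3' sum4 !PoszD !natz3.
split => //.
  by rewrite E2 Q2 -SW; apply: e2_id.
by rewrite E3 Q3 Q2 -SW; apply: e3_id.
Qed.

Lemma all_from_perm (F : 'I_4 -> nat) a b c d : perm4 a b c d ->
  F a = 0%N -> F b = 0%N -> F c = 0%N -> F d = 0%N -> forall x, F x = 0%N.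
Proof.
move=> P Ha Hb Hc Hd x.
have := @sum_perm4n F _ _ _ _ P; rewrite Ha Hb Hc Hd /= => /eqP.
by rewrite sum_nat_eq0 => /forallP /(_ x) /eqP.
Qed.

Local Open Scope ring_scope.

Ltac Lz := repeat match goal with H : _ |- _ => clear H end; lia.

Lemma ring_odd (e U : int) : e - - U * (- U + 1) = e + U * (U + (2 * - U + 1)).
Proof. ring. Qed.
Lemma ring_even (e U : int) : e - - U * - U = e + U * (U + (2 * - U)).
Proof. ring. Qed.

Lemma e3_ge0 (a b c d : int) : 0 <= a -> 0 <= b -> 0 <= c -> 0 <= d -> 0 <= e3_4 a b c d.
Proof.
move=> *; rewrite /e3_4.
by rewrite !addr_ge0 // !mulr_ge0.
Qed.

Lemma main_facts V u v p c1 c2 c3 : toric_data V u v p -> chern V c1 c2 c3 -> mu_stable V ->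
  (c1 = -1 -> [/\ 0 < c2, 0 <= c3, c3 <= c2 ^+ 2 & (c3 = c2 ^+ 2 -> A_odd p v \/ B_odd p v)]) /\
  (c1 = 0 -> [/\ 0 < c2, 0 <= c3, c3 <= c2 ^+ 2 - c2 + 2 &
      (c3 = c2 ^+ 2 - c2 + 2 -> [\/ A_even p v, B_even p v | C_even p v])]).
Proof.
move=> hT hC hS.
have [E1 E2 E3] := @chern_vals V u v p c1 c2 c3 hT hC.
have St := @stab_W V u v p c1 c2 c3 hT hC hS.
pose w := fun i => (Wp p v i)%:Z.
have w0 : forall i, 0 <= w i by move=> i; rewrite /w.
have wlt : forall i, 2 * w i < (Vs v)%:Z.
  move=> i; have := St i; have := @Wp_le p v i; rewrite /w; Lz.
have [i1 [i2 [i3 [i4 [P [s12 s23 s34]]]]]] := sort4 w.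
have E2' := @e2_perm w _ _ _ _ P; have E3' := @e3_perm w _ _ _ _ P.
have SW : w i1 + w i2 + w i3 + w i4 = (Vs v)%:Z.
  by rewrite -(@sum_perm4 w _ _ _ _ P) sum4z /w -(sumWp4 p v).
rewrite -/(w r1) -/(w r2) -/(w r3) -/(w r4) in E2 E3.
rewrite E2' in E2; rewrite E3' in E3; clear E2' E3'.
have [n1 [n2 [n3 [n4 [n5 n6]]]]] := @perm4_neq _ _ _ _ P.
split => c1E.
- have hV : (Vs v)%:Z = 2 * (- Us u) + 1 by clear -E1 c1E; lia.
  have hc2 : e2_4 (w i1) (w i2) (w i3) (w i4) - - Us u * (- Us u + 1) = c2.
    by rewrite E2 hV; apply: ring_odd.
  clear E2.
  have [] := @NTodd (w i1) (w i2) (w i3) (w i4) (- Us u) (w0 _) s34 s23 s12 ltac:(clear -SW hV; lia).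
    by have := wlt i1; clear -hV; lia.
  rewrite hc2.
  rewrite -E3 => c2p c3le eqc.
  split => //; first by rewrite E3; apply: e3_ge0.
  move=> /eqc [d0 c1' a1 b1].
  apply: (@fwd_odd p v `|Us u|%N i3 i1 i2) => //.
  + by rewrite eq_sym.
  + by rewrite eq_sym.
  + by move: c1'; rewrite /w; Lz.
  + by move: a1 hV; rewrite /w; Lz.
  + by move: b1 hV; rewrite /w; Lz.
  + by move: c1' a1 s23 s12; rewrite /w; Lz.
  + by move: hV c1' a1 s23 s12; rewrite /w; Lz.
- have hV : (Vs v)%:Z = 2 * (- Us u) by clear -E1 c1E; lia.
  have hc2 : e2_4 (w i1) (w i2) (w i3) (w i4) - - Us u * - Us u = c2.
    by rewrite E2 hV; apply: ring_even.
  clear E2.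
  have [] := @NTeven (w i1) (w i2) (w i3) (w i4) (- Us u) (w0 _) s34 s23 s12 ltac:(clear -SW hV; lia).
    by have := wlt i1; clear -hV; lia.
  rewrite hc2.
  rewrite -E3 => c2p c3le eqc.
  split => //; first by rewrite E3; apply: e3_ge0.
  move=> /eqc [[a1 [b1 [c1' d1]]]|[a1 [b1 [c1' d1]]]].
    constructor 1; apply: fwd_even1 => x.
    have := @all_from_perm (fun x => (Wp p v x != 1%N) : nat) _ _ _ _ P.
    move: a1 b1 c1' d1; rewrite /w => a1 b1 c1' d1.
    have e a : (Wp p v a)%:Z = 1 -> (Wp p v a != 1%N : nat) = 0%N.
      by move=> H; have -> : Wp p v a = 1%N by move: H; Lz.
    move=> /(_ (e _ a1) (e _ b1) (e _ c1') (e _ d1) x).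
    by case: (Wp p v x =P 1%N).
  have : B_even p v \/ C_even p v.
    apply: (@fwd_even2 p v i1 i2 i3) => //.
    + by move: a1; rewrite /w; Lz.
    + by move: b1; rewrite /w; Lz.
    + by move: c1'; rewrite /w; Lz.
    + by move: hV SW a1 b1 c1' d1; rewrite /w; Lz.
  by case=> H; [constructor 2 | constructor 3].
Qed.

Local Open Scope ring_scope.

Theorem proposition3p8 (V : klyachko) (u : 'I_4 -> int) (v : 'I_4 -> nat)
  (p : 'I_4 -> sub2) (c1 c2 c3 : int) :
  is_filtration V -> toric_data V u v p -> chern V c1 c2 c3 -> mu_stable V ->
  [/\ (2 %| c3 - c1 * c2)%Z,
      (c1 = -1 \/ c1 = 0) -> 0 < c2,
      (c1 = -1 -> 0 <= c3 <= c2 ^+ 2) /\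
      (c1 = 0 -> 0 <= c3 <= c2 ^+ 2 - c2 + 2),
      c1 = -1 ->
        (c3 = c2 ^+ 2 <->
         (exists i j k l : 'I_4, [/\ perm4 i j k l, p i = p j,
             [/\ p j != p k, p j != p l & p k != p l] &
             [/\ (1 <= v i)%N, (1 <= v j)%N, v k = 1%N & (v i + v j)%N = v l]])
         \/
         (exists i j k l : 'I_4, [/\ perm4 i j k l, v i = 0%N,
             [/\ p j != p k, p j != p l & p k != p l],
             v j = 1%N & v k = v l /\ (1 <= v k)%N]))
    & c1 = 0 ->
        (c3 = c2 ^+ 2 - c2 + 2 <->
         [\/ (forall i j : 'I_4, i != j -> p i != p j) /\ (forall i, v i = 1%N),
             (exists i j k l : 'I_4, [/\ perm4 i j k l, p i = p j,
                 [/\ p j != p k, p j != p l & p k != p l],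
                 v i = 1%N /\ v j = 1%N & v k = 2%N /\ v l = 2%N])
           | (exists i j k l : 'I_4, [/\ perm4 i j k l, v i = 0%N,
                 [/\ p j != p k, p j != p l & p k != p l]
               & [/\ v j = 2%N, v k = 2%N & v l = 2%N]])])].
Proof.
move=> _ hT hC hS.
have [E1 P2E P3E] := @e_from_P V u v p c1 c2 c3 hT hC.
have [Fo Fe] := @main_facts V u v p c1 c2 c3 hT hC hS.
split.
- have [E1' E2 E3] := @chern_vals V u v p c1 c2 c3 hT hC.
  rewrite E1' E2 E3; apply: parity.
  by rewrite (sumWp4 p v).
- by case=> [/Fo [] | /Fe []].
- split.
    by move=> /Fo [_ h1 h2 _]; rewrite h1 h2.
  by move=> /Fe [_ h1 h2 _]; rewrite h1 h2.
- move=> c1E; split; first by case: (Fo c1E).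
  move=> H; have [A [h1 h2 h3]] := @bwd_odd p v H.
  apply: (@arith_odd (Us u) (Vs v)%:Z (P2s p v)%:Z (P3s p v)%:Z c2 c3 A%:Z).
  + by rewrite -c1E E1.
  + exact: P2E.
  + exact: P3E.
  + by rewrite h1; lia.
  + by rewrite h2 PoszD PoszM natz2.
  + by rewrite h3 PoszD PoszM natz3.
- move=> c1E; split; first by case: (Fe c1E).
  move=> H.
  apply: (@arith_even (Us u) (Vs v)%:Z (P2s p v)%:Z (P3s p v)%:Z c2 c3).
  + by rewrite -c1E E1.
  + exact: P2E.
  + exact: P3E.
  + by case: (@bwd_even p v H) => [[-> [-> ->]]|[-> [-> ->]]]; [left | right].
Qed.
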